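(* Let $1<d\le n$ be integers, let $C$ be a real symmetric $n\times n$ matrix with unit diagonal, and let $T_{n,d}=\{Y\in\mathbb{R}^{n\times d}: \|Y_i\|_2=1 \text{ for every row } Y_i\}$. For $Y\in T_{n,d}$ set $\psi=YY^T-C$ and $F_Y=2\psi Y$. Suppose $Y\in T_{n,d}$ satisfies \[ F_Y-\operatorname{diag}(F_YY^T)\,Y=0. \] Define the diagonal matrix $\lambda=\tfrac12\operatorname{diag}(F_YY^T)$ and $C(\lambda)=C+\lambda$. Then there exist an orthogonal matrix $Q$ and a diagonal matrix $D$ with \[ C(\lambda)=QDQ^T,\qquad YY^T=QD^*Q^T, \] where $D^*$ is a diagonal matrix obtained from $D$ by selecting at most $d$ nonnegative diagonal entries of $D$ (each selected entry keeping its position) and setting all other entries to zero.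
   Context: For a square matrix $A$, $\operatorname{diag}(A)$ denotes the diagonal matrix with the same diagonal as $A$, i.e. $\operatorname{diag}(A)_{ij}=\delta_{ij}A_{ij}$. The quantity $F_Y-\operatorname{diag}(F_YY^T)Y$ is the gradient on $T_{n,d}$ (with the Frobenius metric) of $F(Y)=\tfrac12\|YY^T-C\|_F^2$, whose Euclidean differential is $F_Y$. *)

(* Defs.v *)
From mathcomp Require Import all_boot all_order all_algebra.
From mathcomp Require Import reals.
Set Implicit Arguments. Unset Strict Implicit. Unset Printing Implicit Defensive.
Import Order.TTheory GRing.Theory Num.Theory.
Local Open Scope ring_scope.

Definition diagm (R : pzRingType) (n : nat) (A : 'M[R]_n) : 'M[R]_n :=
  diag_mx (\row_i A i i).

Definition in_T (R : realType) (n d : nat) (Y : 'M[R]_(n, d)) : Prop :=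
  forall i : 'I_n, \sum_(j < d) Y i j ^+ 2 = 1.

Definition orthogonal_mx (R : pzRingType) (n : nat) (Q : 'M[R]_n) : Prop :=
  Q *m Q^T = 1%:M.

Definition FY (R : realType) (n d : nat) (C : 'M[R]_n) (Y : 'M[R]_(n, d)) : 'M[R]_(n, d) :=
  2%:R *: ((Y *m Y^T - C) *m Y).

(* Main.v *)
Require Import Defs.
From mathcomp Require Import all_boot all_order all_algebra.
From mathcomp Require Import reals.
From mathcomp Require Import complex spectral.
From mathcomp Require Import ring lra.
Import Order.TTheory GRing.Theory Num.Theory.
Local Open Scope ring_scope.

Section Helpers.
Set Implicit Arguments. Unset Strict Implicit. Unset Printing Implicit Defensive.
Variable R : realType.
Local Notation C := (R[i]).
Local Notation f := (real_complex R).




Lemma conjf (x : R) : conjc (f x) = f x.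
Proof. by rewrite /real_complex_def /= oppr0. Qed.

Lemma eig_real n (A : 'M[R]_n) (w : 'rV[C]_n) z :
  A^T = A -> w != 0 -> w *m map_mx f A = z *: w -> complex.Im z = 0.
Proof.
move=> AT w0 Heq.
have h1 j : \sum_i w 0 i * f (A i j) = z * w 0 j.
  by move/matrixP: Heq => /(_ 0 j); rewrite !mxE => <-; apply: eq_bigr => i _; rewrite mxE.
have h2 j : \sum_i conjc (w 0 i) * f (A i j) = conjc z * conjc (w 0 j).
  have := congr1 conjc (h1 j); rewrite rmorph_sum rmorphM => <-.
  apply: eq_bigr => i _; by rewrite rmorphM /= oppr0.
pose s := \sum_j w 0 j * conjc (w 0 j).
have T1 : \sum_j \sum_i w 0 i * f (A i j) * conjc (w 0 j) = z * s.
  rewrite /s mulr_sumr; apply: eq_bigr => j _; rewrite -mulr_suml h1 mulrA //.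
have T2 : \sum_j \sum_i w 0 i * f (A i j) * conjc (w 0 j) = conjc z * s.
  rewrite exchange_big /s mulr_sumr; apply: eq_bigr => i _.
  have h : \sum_j conjc (w 0 j) * f (A i j) = conjc z * conjc (w 0 i).
    by rewrite -h2; apply: eq_bigr => j _; rewrite -{1}AT mxE.
  rewrite mulrCA -h mulr_sumr; apply: eq_bigr => j _.
  by rewrite -mulrA [_ * conjc _]mulrC.
have s0 : s != 0.
  apply: contra w0 => /eqP s0; apply/eqP/rowP => j; rewrite mxE.
  have : \sum_j `|w 0 j| ^+ 2 = 0.
    by apply: etrans s0; apply: eq_bigr => k _; rewrite normCK.
  move/psumr_eq0P => /(_ (fun k _ => exprn_ge0 _ (normr_ge0 _)) j isT) /eqP.
  by rewrite sqrf_eq0 normr_eq0 => /eqP.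
have : z = conjc z by apply: (mulIf s0); rewrite -T1 -T2.
case: z {Heq h1 h2 T1 T2} => a b /= [] /eqP; rewrite -subr_eq0 opprK -mulr2n mulrn_eq0 /=.
by move/eqP.
Qed.

Lemma ReD (x y : R[i]) : complex.Re (x + y) = complex.Re x + complex.Re y.
Proof. by case: x; case: y. Qed.

Lemma ReMf (u : R[i]) c : complex.Re (u * f c) = complex.Re u * c.
Proof. by case: u => a b /=; rewrite mulr0 subr0. Qed.

Lemma ReMr (z u : R[i]) : complex.Im z = 0 -> complex.Re (z * u) = complex.Re z * complex.Re u.
Proof. by case: z => a b /= ->; case: u => c d /=; rewrite mul0r subr0. Qed.

Lemma re_eig n (A : 'M[R]_n) (w : 'rV[C]_n) z :
  w *m map_mx f A = z *: w -> complex.Im z = 0 ->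
  map_mx (@complex.Re R) w *m A = complex.Re z *: map_mx (@complex.Re R) w.
Proof.
move=> Heq z0; apply/rowP => j; rewrite !mxE.
move/matrixP: Heq => /(_ 0 j); rewrite !mxE => /(congr1 (@complex.Re R)).
rewrite ReMr // => <-.
rewrite (big_morph (@complex.Re R) ReD (erefl _)); apply: eq_bigr => i _.
by rewrite !mxE ReMf.
Qed.

Lemma common_real_eig n (A B : 'M[R]_n.+1) : A^T = A -> B^T = B -> A *m B = B *m A ->
  exists (v : 'rV[R]_n.+1) a b, [/\ v != 0, v *m A = a *: v & v *m B = b *: v].
Proof.
move=> AT BT AB.
have cAB : map_mx f A *m map_mx f B = map_mx f B *m map_mx f A by rewrite -!map_mxM AB.
have [w w0 /andP[sA sB]] := @common_eigenvector2 C _ (map_mx f A) (map_mx f B) isT cAB.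
have [z1 /eigenspaceP e1] := eigenvectorP _ sA.
have [z2 /eigenspaceP e2] := eigenvectorP _ sB.
have i1 := eig_real AT w0 e1.
have i2 := eig_real BT w0 e2.
have gen : forall w' : 'rV[C]_n.+1, w' *m map_mx f A = z1 *: w' -> w' *m map_mx f B = z2 *: w' ->
  map_mx (@complex.Re R) w' != 0 -> exists (v : 'rV[R]_n.+1) a b, [/\ v != 0, v *m A = a *: v & v *m B = b *: v].
  move=> w' h1 h2 nz; exists (map_mx (@complex.Re R) w'), (complex.Re z1), (complex.Re z2).
  by split => //; apply: re_eig.
have [/eqP Re0|] := boolP (map_mx (@complex.Re R) w == 0); last exact: gen.
apply: (gen (Complex 0 1 *: w)).
- by rewrite -scalemxAl e1 !scalerA mulrC.
- by rewrite -scalemxAl e2 !scalerA mulrC.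
apply: contra w0 => /eqP Im0; apply/eqP/rowP => j.
move/rowP: Re0 => /(_ j); move/rowP: Im0 => /(_ j); rewrite !mxE.
by case: (w 0 j) => a b /= /eqP; rewrite mul0r sub0r mul1r oppr_eq0 => /eqP -> ->.
Qed.


Lemma sumsq0 n (v : 'rV[R]_n) : v *m v^T = 0 -> v = 0.
Proof.
move=> /matrixP /(_ 0 0); rewrite !mxE => h.
have : \sum_j v 0 j ^+ 2 = 0 by apply: etrans h; apply: eq_bigr => j _; rewrite mxE expr2.
move/psumr_eq0P => h2; apply/rowP => j; rewrite mxE.
by apply/eqP; rewrite -sqrf_eq0 h2 // => i _; exact: sqr_ge0.
Qed.

Lemma househ n (u : 'rV[R]_n.+1) : u *m u^T = 1%:M ->
  exists H : 'M[R]_n.+1, H *m H^T = 1%:M /\ row 0 H = u.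
Proof.
move=> uu; pose e := delta_mx 0 (0 : 'I_n.+1) : 'rV[R]_n.+1.
pose a := u 0 0.
have eu : e *m u^T = a%:M.
  by rewrite -rowE; apply/rowP => i; rewrite ord1 !mxE eqxx mulr1n.
have ue : u *m e^T = a%:M by rewrite -[u]trmxK -trmx_mul eu tr_scalar_mx.
have ee : e *m e^T = 1%:M.
  by rewrite -rowE; apply/rowP => i; rewrite ord1 !mxE eqxx.
pose w := u - e.
have ww : w *m w^T = (2 - 2 * a)%:M.
  rewrite /w linearB /= mulmxBl !mulmxBr uu ue eu ee.
  by apply/rowP => i; rewrite ord1 !mxE eqxx /=; ring.
have wE : w = u - e by [].
clearbody w.
have [a1|a1] := eqVneq a 1.
  exists 1%:M; split; first by rewrite trmx1 mulmx1.
  rewrite row1; apply/eqP; rewrite eq_sym -subr_eq0 -wE; apply/eqP; apply: sumsq0.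
  by rewrite ww a1; apply/rowP => i; rewrite ord1 !mxE eqxx /=; ring.
pose c := (1 - a)^-1.
have ca : c * (1 - a) = 1 by rewrite mulVf // subr_eq0 eq_sym.
pose H := 1%:M - c *: (w^T *m w).
have HT : H^T = H by rewrite /H linearB /= linearZ /= trmx_mul trmxK trmx1.
exists H; split.
  rewrite HT /H mulmxBl !mulmxBr mul1mx mulmx1 -!scalemxAl -!scalemxAr.
  rewrite !mulmxA -[w^T *m w *m w^T]mulmxA ww mul_mx_scalar -!scalemxAl !scalerA.
  have -> : c * (c * (2 - 2 * a)) = c + c.
    have -> : 2 - 2 * a = (1 - a) + (1 - a) by ring.
    by rewrite mulrDr ca mulrDr mulr1.
  by rewrite scalerDl opprB mul1mx; set W := c *: _; rewrite addrK subrK.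
rewrite rowE /H mulmxBr mulmx1 -scalemxAr mulmxA.
have -> : delta_mx 0 0 *m w^T = (a - 1)%:M.
  by rewrite wE linearB /= mulmxBr -/e eu ee; apply/rowP => i; rewrite ord1 !mxE eqxx /=.
rewrite mul_scalar_mx scalerA.
have -> : c * (a - 1) = -1 by rewrite -opprB mulrN ca.
by rewrite scaleN1r opprK wE addrC subrK.
Qed.

Lemma block_step n (H A : 'M[R]_(1 + n)) a : H *m H^T = 1%:M -> A^T = A ->
  row 0 H *m A = a *: row 0 H ->
  let A1 := H *m A *m H^T in
  [/\ A1^T = A1, ursubmx A1 = 0 & dlsubmx A1 = 0].
Proof.
move=> HH AT rA A1.
have A1T : A1^T = A1 by rewrite /A1 !trmx_mul trmxK AT mulmxA.
have ur : ursubmx A1 = 0.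
  have r0 : row 0 A1 = a *: row 0 1%:M.
    by rewrite /A1 !row_mul rA -scalemxAl -row_mul HH.
  apply/matrixP => i j; rewrite !mxE.
  move/rowP: r0 => /(_ (rshift 1 j)); rewrite !mxE.
  have -> : lshift n i = 0 by apply/val_inj; rewrite /= ord1.
  by move=> ->; rewrite mulr0n mulr0.
split => //.
by rewrite -A1T -trmx_ursub ur trmx0.
Qed.

Lemma blk_sym n (X : 'M[R]_(1 + n)) : X^T = X -> (drsubmx X)^T = drsubmx X.
Proof. by move=> XT; rewrite trmx_drsub XT. Qed.

Lemma blk_comm n (X Y : 'M[R]_(1 + n)) : ursubmx X = 0 -> dlsubmx X = 0 ->
  ursubmx Y = 0 -> dlsubmx Y = 0 -> X *m Y = Y *m X ->
  drsubmx X *m drsubmx Y = drsubmx Y *m drsubmx X.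
Proof.
move=> uX dX uY dY.
rewrite -[X]submxK -[Y]submxK uX dX uY dY !mulmx_block => /(congr1 drsubmx).
by rewrite !block_mxKdr !mul0mx !add0r.
Qed.

Lemma blk_conj n (X : 'M[R]_(1 + n)) (Q' : 'M[R]_n) : ursubmx X = 0 -> dlsubmx X = 0 ->
  is_diag_mx (Q'^T *m drsubmx X *m Q') ->
  is_diag_mx ((block_mx 1%:M 0 0 Q')^T *m X *m block_mx 1%:M 0 0 Q').
Proof.
move=> uX dX dQ.
rewrite -[X]submxK uX dX tr_block_mx !mulmx_block !trmx0 trmx1 !mulmx0 !mul0mx !mulmx1 !mul1mx !addr0 !add0r.
by rewrite (@is_diag_block_mx _ 1 n 1 n) // mul0mx !eqxx mx11_is_diag dQ.
Qed.

Lemma simdiag n : forall A B : 'M[R]_n, A^T = A -> B^T = B -> A *m B = B *m A ->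
  exists Q : 'M[R]_n, [/\ Q *m Q^T = 1%:M, is_diag_mx (Q^T *m A *m Q) & is_diag_mx (Q^T *m B *m Q)].
Proof.
elim: n => [|n IH] A B AT BT AB.
  exists 1%:M; split; first by rewrite trmx1 mulmx1.
    by apply/is_diag_mxP => -[].
  by apply/is_diag_mxP => -[].
have [v [a [b [v0 vA vB]]]] := common_real_eig AT BT AB.
pose s := (v *m v^T) 0 0.
have sE : s = \sum_j v 0 j ^+ 2 by rewrite /s mxE; apply: eq_bigr => j _; rewrite mxE expr2.
have s0 : s != 0.
  apply: contra v0 => /eqP s0; apply/eqP/sumsq0; apply/rowP => i; rewrite ord1 -/s s0.
  by rewrite mxE.
have sge0 : 0 <= s by rewrite sE; apply: sumr_ge0 => j _; exact: sqr_ge0.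
pose k := (Num.sqrt s)^-1.
pose u := k *: v.
have uu : u *m u^T = 1%:M.
  rewrite /u linearZ /= -scalemxAl -scalemxAr scalerA; apply/rowP => i; rewrite ord1 [LHS]mxE -/s !mxE eqxx mulr1n.
  by rewrite -expr2 exprVn sqr_sqrtr // mulVf.
have uA : u *m A = a *: u by rewrite /u -scalemxAl vA !scalerA mulrC.
have uB : u *m B = b *: u by rewrite /u -scalemxAl vB !scalerA mulrC.
have [H [HH rH]] := househ uu.
have HtH : H^T *m H = 1%:M := mulmx1C HH.
rewrite -rH in uA uB.
have [A1T urA dlA] := @block_step n H A a HH AT uA.
have [B1T urB dlB] := @block_step n H B b HH BT uB.
set A1 := H *m A *m H^T in A1T urA dlA.
set B1 := H *m B *m H^T in B1T urB dlB.
have A1B1 : A1 *m B1 = B1 *m A1.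
  rewrite /A1 /B1 !mulmxA -[H *m A *m H^T *m H]mulmxA -[H *m B *m H^T *m H]mulmxA HtH !mulmx1.
  by rewrite -[H *m A *m B]mulmxA AB mulmxA.
have A2T := blk_sym A1T.
have B2T := blk_sym B1T.
have A2B2 := blk_comm urA dlA urB dlB A1B1.
have [Q' [QQ' dA dB]] := IH _ _ A2T B2T A2B2.
pose K := block_mx 1%:M 0 0 Q' : 'M[R]_(1 + n).
have KK : K *m K^T = 1%:M.
  rewrite /K tr_block_mx mulmx_block !trmx0 trmx1 !mulmx0 !mul0mx !mulmx1 !addr0 !add0r QQ'.
  by rewrite -scalar_mx_block.
exists (H^T *m K); split.
- by rewrite trmx_mul trmxK mulmxA -[H^T *m K *m K^T]mulmxA KK mulmx1 HtH.
- rewrite trmx_mul trmxK !mulmxA -[K^T *m H *m A]mulmxA -[K^T *m (H *m A) *m H^T]mulmxA -/A1.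
  exact: blk_conj.
- rewrite trmx_mul trmxK !mulmxA -[K^T *m H *m B]mulmxA -[K^T *m (H *m B) *m H^T]mulmxA -/B1.
  exact: blk_conj.
Qed.

Lemma rank_diag_ge n (E : 'rV[R]_n) (S : {set 'I_n}) :
  (forall i, i \in S -> E 0 i != 0) -> (#|S| <= \rank (diag_mx E))%N.
Proof.
move=> HS.
pose s := fun a : 'I_#|S| => enum_val a.
have sS a : E 0 (s a) != 0 by apply: HS; exact: enum_valP.
pose G := rowsub s (diag_mx E).
pose K := \matrix_(j < n, b < #|S|) ((j == s b)%:R / E 0 j).
have GK : G *m K = 1%:M.
  apply/matrixP => a b; rewrite !mxE (bigD1 (s a)) //= big1; last first.
    by move=> j /negPf ja; rewrite !mxE eq_sym ja mulr0n mul0r.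
  rewrite !mxE eqxx mulr1n addr0 mulrCA mulfV // mulr1.
  by rewrite (inj_eq (@enum_val_inj _ _)).
apply: (@leq_trans (\rank G)).
  by rewrite -{1}(mxrank1 R #|S|) -GK mxrankM_maxl.
by rewrite /G rowsubE mxrankM_maxr.
Qed.

End Helpers.

Theorem lemma6p1 (R : realType) (n d : nat) (C : 'M[R]_n) (Y : 'M[R]_(n, d)) :
  (1 < d)%N -> (d <= n)%N ->
  C^T = C -> (forall i : 'I_n, C i i = 1) ->
  in_T Y ->
  FY C Y - diagm (FY C Y *m Y^T) *m Y = 0 ->
  let lambda := 2%:R^-1 *: diagm (FY C Y *m Y^T) in
  exists (Q : 'M[R]_n) (D : 'rV[R]_n) (S : {set 'I_n}),
    [/\ orthogonal_mx Q,
        C + lambda = Q *m diag_mx D *m Q^T,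
        (#|S| <= d)%N,
        (forall i, i \in S -> 0 <= D 0 i) &
        Y *m Y^T = Q *m diag_mx (\row_i (if i \in S then D 0 i else 0)) *m Q^T].
Proof.
move=> _ _ CT _ _ HF lambda.
set P := Y *m Y^T.
have diagmZ : forall k (X : 'M[R]_n), diagm (k *: X) = k *: diagm X.
  by move=> k X; apply/matrixP => i j; rewrite !mxE mulrnAr.
have FYt : FY C Y *m Y^T = 2%:R *: ((P - C) *m P).
  by rewrite /FY -scalemxAl -mulmxA.
have lamE : lambda = diagm ((P - C) *m P).
  by rewrite /lambda FYt diagmZ scalerA mulVf ?pnatr_eq0 // scale1r.
have HY : (P - C) *m Y = lambda *m Y.
  move: HF; rewrite FYt diagmZ -lamE /FY -/P -scalemxAl -scalerBr => /eqP.
  by rewrite scaler_eq0 pnatr_eq0 /= subr_eq0 => /eqP.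
set M := C + lambda.
have MY : M *m Y = P *m Y by rewrite /M mulmxDl -HY mulmxBl addrC subrK.
have MP : M *m P = P *m P by rewrite /P !mulmxA MY.
have PT : P^T = P by rewrite /P trmx_mul trmxK.
have lT : lambda^T = lambda by rewrite lamE /diagm tr_diag_mx.
have MT : M^T = M by rewrite /M linearD /= CT lT.
have PM : P *m M = P *m P.
  by rewrite -[P *m M]trmxK trmx_mul MT PT MP trmx_mul PT.
have MPc : M *m P = P *m M by rewrite MP PM.
have PE : P = Y *m Y^T by [].
clearbody P.
have [Q [QQ dA dB]] := simdiag MT PT MPc.
have QtQ := mulmx1C QQ.
have /diag_mxP [D DE] := dA.
have /diag_mxP [E EE] := dB.
have conjE : forall X : 'M[R]_n, X = Q *m (Q^T *m X *m Q) *m Q^T.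
  by move=> X; rewrite !mulmxA QQ mul1mx -mulmxA QQ mulmx1.
have DEE : diag_mx D *m diag_mx E = diag_mx E *m diag_mx E.
  rewrite -DE -EE !mulmxA -[Q^T *m M *m Q *m Q^T]mulmxA QQ mulmx1.
  rewrite -[Q^T *m P *m Q *m Q^T]mulmxA QQ mulmx1.
  by rewrite -[Q^T *m M *m P]mulmxA MP mulmxA.
have DEi i : E 0 i != 0 -> D 0 i = E 0 i.
  move=> Ei; move/matrixP: DEE => /(_ i i); rewrite !mul_diag_mx !mxE eqxx !mulr1n => h.
  by apply: (mulIf Ei).
have QYE : Q^T *m P *m Q = (Q^T *m Y) *m (Q^T *m Y)^T by rewrite PE trmx_mul trmxK !mulmxA.
have Ege0 i : 0 <= E 0 i.
  have <- : (Q^T *m P *m Q) i i = E 0 i by rewrite EE mxE eqxx mulr1n.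
  rewrite QYE; move: (Q^T *m Y) => Z; rewrite mxE; apply: sumr_ge0 => k _.
  by rewrite mxE -expr2 sqr_ge0.
exists Q, D, [set i | E 0 i != 0]; split.
- exact: QQ.
- by rewrite {1}(conjE M) DE.
- apply: (leq_trans (rank_diag_ge (E := E) (S := [set i | E 0 i != 0]) _)).
    by move=> i; rewrite inE.
  by rewrite -EE QYE (leq_trans (mxrankM_maxl _ _)) // rank_leq_col.
- by move=> i; rewrite inE => Ei; rewrite DEi.
rewrite {1}(conjE P) EE; congr (_ *m _ *m _); apply/matrixP => i j; rewrite !mxE inE.
by case: (eqVneq (E 0 i) 0) => [-> | Ei] //=; rewrite DEi.
Qed.
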